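(* Let $\alpha\ge\tfrac12$ and $1\le q<\infty$. Then $\|\widehat{\mathbf{1}_{[0,1)}}\|_{\infty,q}<\infty$ if and only if $q>\frac{2(\alpha+1)}{\alpha+3/2}$. In particular $\widehat{\mathbf{1}_{[0,1)}}\in(L^\infty,\ell^2)(\mathbb{R}_+,*_\alpha)$.
   Context: Haar measure $\omega_\alpha(dz)=z^{2\alpha+1}dz$ on $\mathbb{R}_+$. Characters of the Bessel–Kingman hypergroup: $\chi_\lambda(x)=j_\alpha(\lambda x)$ with $j_\alpha(x)=\sum_{k\ge0}\frac{(-1)^k\Gamma(\alpha+1)}{2^{2k}k!\Gamma(\alpha+k+1)}x^{2k}$. Fourier transform: $\hat f(\lambda)=\int_{\mathbb{R}_+}f(x)\chi_\lambda(x)\,d\omega_\alpha(x)$. Let $I_n=[n-1,n)$, $\omega_n=\omega_\alpha(I_n)$, and $\|g\|_{\infty,q}=\big(\sum_{n\ge1}\omega_n\sup_{\lambda\in I_n}|g(\lambda)|^q\big)^{1/q}$; $(L^\infty,\ell^q)(\mathbb{R}_+,*_\alpha)$ is the space of measurable $g$ with $\|g\|_{\infty,q}<\infty$. *)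

(* Defs.v *)
From Stdlib Require Import Reals Lra ClassicalEpsilon Factorial.
Open Scope R_scope.

(* Nonnegative real power with 0^q = 0 (Stdlib's Rpower 0 q = 1). *)
Definition rpow (x q : R) : R :=
  if Rle_dec x 0 then 0 else Rpower x q.

(* Pochhammer: prod_{i=1}^k (a + i) = Gamma(a+k+1)/Gamma(a+1). *)
Fixpoint poch1 (a : R) (k : nat) : R :=
  match k with
  | O => 1
  | S k' => poch1 a k' * (a + INR (S k'))
  end.

(* Coefficient of x^(2k) in j_alpha:
   (-1)^k Gamma(alpha+1) / (2^(2k) k! Gamma(alpha+k+1)). *)
Definition jcoef (alpha : R) (k : nat) : R :=
  (-1) ^ k / (2 ^ (2 * k) * INR (fact k) * poch1 alpha k).

Definition j_alpha (alpha x : R) : R :=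
  epsilon (inhabits 0)
    (fun l => infinite_sum (fun k => jcoef alpha k * x ^ (2 * k)) l).

(* Density of the Haar measure omega_alpha(dz) = z^(2 alpha + 1) dz on R_+. *)
Definition haar_density (alpha z : R) : R := rpow z (2 * alpha + 1).

Definition RInt (f : R -> R) (a b : R) : R :=
  epsilon (inhabits 0)
    (fun l => exists pr : Riemann_integrable f a b, RiemannInt pr = l).

Definition ind01 (x : R) : R :=
  if Rle_dec 0 x then (if Rlt_dec x 1 then 1 else 0) else 0.

(* Fourier transform of 1_[0,1) on the Bessel-Kingman hypergroup:
   hat f(lambda) = int_{R_+} f(x) j_alpha(lambda x) d omega_alpha(x);
   since f vanishes outside [0,1) the integral is over [0,1]. *)
Definition hat_ind01 (alpha lambda : R) : R :=
  RInt (fun x => ind01 x * j_alpha alpha (lambda * x) * haar_density alpha x) 0 1.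

Definition omega_n (alpha : R) (n : nat) : R :=
  RInt (haar_density alpha) (INR n - 1) (INR n).

Definition sup_set (g : R -> R) (q : R) (n : nat) : R -> Prop :=
  fun y => exists lam, INR n - 1 <= lam < INR n /\ y = rpow (Rabs (g lam)) q.

(* ||g||_{infty,q} < infty : each sup over I_n is finite (attained as a
   least upper bound M n) and sum_{n>=1} omega_n M n converges. *)
Definition finite_Linf_lq (alpha q : R) (g : R -> R) : Prop :=
  exists M : nat -> R,
    (forall n, (1 <= n)%nat -> is_lub (sup_set g q n) (M n)) /\
    exists l, infinite_sum (fun k => omega_n alpha (S k) * M (S k)) l.

(* Main.v *)
Require Import Defs.
From Stdlib Require Import Reals Lra Lia ZArith ClassicalEpsilon Classical Factorial.
From Coquelicot Require Import Coquelicot.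
Open Scope R_scope.

Lemma poch1_S nu k : poch1 nu (S k) = poch1 nu k * (nu + INR (S k)).
Proof. reflexivity. Qed.

Lemma poch_pos nu k : 0 <= nu -> 0 < poch1 nu k.
Proof. intros H; induction k. simpl; lra. rewrite poch1_S. apply Rmult_lt_0_compat; auto.
  pose proof (pos_INR k). rewrite S_INR. lra. Qed.

Lemma poch_S nu k : poch1 nu (S k) = (nu+1) * poch1 (nu+1) k.
Proof. induction k. simpl. lra.
  rewrite poch1_S. rewrite IHk. rewrite (poch1_S (nu+1)). rewrite (S_INR (S k)). ring. Qed.

Lemma jcoef_S nu k : 0 <= nu ->
  jcoef nu (S k) = jcoef nu k * (-1) / (4 * INR (S k) * (nu + INR (S k))).
Proof. intros H. unfold jcoef. pose proof (poch_pos nu k H).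
  pose proof (pos_INR k). pose proof (INR_fact_neq_0 k).
  replace (2 * S k)%nat with (S (S (2*k))) by lia.
  rewrite fact_simpl, mult_INR. simpl pow. rewrite poch1_S, !S_INR.
  field. repeat split; try lra. apply pow_nonzero; lra. Qed.

Lemma jcoef_0 nu : jcoef nu 0 = 1.
Proof. unfold jcoef. simpl. lra. Qed.

Lemma jcoef_shift nu k : 0 <= nu ->
  jcoef (nu+1) k = jcoef nu k * (nu+1)/(nu+INR (S k)).
Proof. intros H. unfold jcoef. pose proof (poch_pos (nu+1) k ltac:(lra)).
  pose proof (poch_S nu k) as E. rewrite poch1_S in E.
  pose proof (pos_INR k). pose proof (INR_fact_neq_0 k).
  assert (poch1 nu k = (nu+1) * poch1 (nu+1) k / (nu + INR (S k))) as E2.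
  { rewrite <- E. rewrite S_INR. field. lra. }
  rewrite E2. rewrite S_INR. field. repeat split; try lra. apply pow_nonzero; lra. Qed.

Lemma jcoef_ne0 nu k : 0 <= nu -> jcoef nu k <> 0.
Proof. intros H. unfold jcoef. pose proof (poch_pos nu k H). pose proof (INR_fact_neq_0 k).
  apply Rmult_integral_contrapositive_currified. apply pow_nonzero; lra.
  apply Rinv_neq_0_compat. apply Rmult_integral_contrapositive_currified.
  apply Rmult_integral_contrapositive_currified; auto. apply pow_nonzero; lra. lra. Qed.

Lemma jcoef_radius nu : 0 <= nu -> CV_radius (jcoef nu) = p_infty.
Proof. intros H. apply CV_radius_infinite_DAlembert. intros; apply jcoef_ne0; auto.
  apply is_lim_seq_Reals. intros eps Heps.
  destruct (archimed (/eps)) as [A _].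
  assert (0 <= IZR (up (/eps))) by (pose proof (Rinv_0_lt_compat _ Heps); lra).
  exists (Z.to_nat (up (/ eps))). intros n Hn. unfold Rdist. rewrite Rminus_0_r, Rabs_Rabsolu.
  rewrite jcoef_S by auto. pose proof (jcoef_ne0 nu n H).
  pose proof (pos_INR n). rewrite S_INR.
  replace (jcoef nu n * -1 / (4 * (INR n + 1) * (nu + (INR n + 1))) / jcoef nu n)
   with (- / (4 * (INR n + 1) * (nu + (INR n + 1)))) by (field; lra).
  rewrite Rabs_Ropp, Rabs_right.
  2:{ left. apply Rinv_0_lt_compat. apply Rmult_lt_0_compat; lra. }
  assert (IZR (up (/eps)) <= INR n).
  { apply le_INR in Hn. rewrite INR_IZR_INZ, Z2Nat.id in Hn. exact Hn. apply le_IZR; lra. }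
  apply (Rle_lt_trans _ (/ (INR n + 1))).
  apply Rinv_le_contravar. lra. nra.
  rewrite <- (Rinv_inv eps). apply Rinv_lt_contravar. apply Rmult_lt_0_compat. apply Rinv_0_lt_compat; lra. lra. lra. Qed.
From Stdlib Require Import FunctionalExtensionality.
Definition g nu y := PSeries (jcoef nu) y.

Lemma g_ex nu y : 0 <= nu -> ex_pseries (jcoef nu) y.
Proof. intros H. apply CV_radius_inside. rewrite jcoef_radius; simpl; auto. Qed.

Lemma j_alpha_g nu x : 0 <= nu -> j_alpha nu x = g nu (x^2).
Proof. intros H.
  assert (Hs : infinite_sum (fun k => jcoef nu k * x^(2*k)) (g nu (x^2))).
  { pose proof (PSeries_correct _ (x^2) (g_ex nu (x^2) H)) as P.
    apply is_pseries_Reals in P. unfold Pser in P.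
    replace (fun k => jcoef nu k * x^(2*k)) with (fun n => jcoef nu n * (x^2)^n). exact P.
    apply functional_extensionality; intros k. rewrite pow_mult. reflexivity. }
  unfold j_alpha. apply (uniqueness_sum (fun k => jcoef nu k * x^(2*k))); auto.
  apply (epsilon_spec (inhabits 0) (fun l => infinite_sum (fun k => jcoef nu k * x ^ (2 * k)) l)).
  eauto. Qed.

Lemma g_derive nu y : 0 <= nu -> is_derive (g nu) y (-(1/(4*(nu+1))) * g (nu+1) y).
Proof. intros H. pose proof (is_derive_PSeries (jcoef nu) y) as D.
  rewrite jcoef_radius in D by auto. specialize (D I).
  unfold g. replace (- (1 / (4 * (nu + 1))) * PSeries (jcoef (nu + 1)) y)
    with (PSeries (PS_derive (jcoef nu)) y); auto.
  rewrite <- PSeries_scal. apply PSeries_ext. intros n.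
  unfold PS_derive, PS_scal, scal; cbn -[INR]; unfold mult; cbn -[INR].
  rewrite jcoef_S, jcoef_shift by auto. pose proof (pos_INR n). rewrite S_INR. field. lra. Qed.

Lemma g_rec nu y : 0 <= nu ->
  g (nu+1) y - g nu y = y / (4*(nu+1)*(nu+2)) * g (nu+2) y.
Proof. intros H. unfold g. rewrite <- PSeries_minus by (apply g_ex; lra).
  replace (y / (4 * (nu + 1) * (nu + 2)) * PSeries (jcoef (nu + 2)) y)
    with (y * PSeries (PS_scal (1/(4 * (nu + 1) * (nu + 2))) (jcoef (nu + 2))) y).
  2:{ rewrite PSeries_scal. field. lra. }
  rewrite <- PSeries_incr_1. apply PSeries_ext. intros n.
  unfold PS_minus, PS_incr_1, PS_scal, scal, plus, opp; cbn -[INR]; unfold mult, plus, opp; cbn -[INR].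
  destruct n as [|j]. rewrite !jcoef_0. ring.
  replace (nu+2) with (nu+1+1) by ring.
  rewrite (jcoef_S (nu+1)) by lra. rewrite (jcoef_S nu) by lra.
  rewrite (jcoef_shift (nu+1)) by lra. rewrite !(jcoef_shift nu j) by lra.
  pose proof (pos_INR j). rewrite !S_INR. field. repeat split; lra. Qed.

Lemma g_0 nu : g nu 0 = 1.
Proof. unfold g. rewrite PSeries_0. apply jcoef_0. Qed.

Lemma g_cont nu y : 0 <= nu -> continuity_pt (g nu) y.
Proof. intros H. apply PSeries_continuity. rewrite jcoef_radius; simpl; auto. Qed.

Lemma D_eq (f : R -> R) (x l l' : R) : is_derive f x l -> l = l' -> is_derive f x l'.
Proof. intros; subst; auto. Qed.
Lemma D_mul (f h : R -> R) (x a b : R) : is_derive f x a -> is_derive h x b ->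
  is_derive (fun t => f t * h t) x (a * h x + f x * b).
Proof. intros. apply (is_derive_mult f h x a b); auto. intros; apply Rmult_comm. Qed.
Lemma D_comp (f h : R -> R) (x a b : R) : is_derive f (h x) a -> is_derive h x b ->
  is_derive (fun t => f (h t)) x (b * a).
Proof. intros. apply (is_derive_comp f h x a b); auto. Qed.
Lemma D_sq (x : R) : is_derive (fun t => t^2) x (2*x).
Proof. auto_derive; auto. ring. Qed.
Lemma D_id (x : R) : is_derive (fun t : R => t) x 1.
Proof. auto_derive; auto. Qed.
Lemma D_const (c : R) (x : R) : is_derive (fun _ => c) x 0.
Proof. auto_derive; auto. Qed.

Definition Af nu x := g nu (x^2).
Definition Bf nu x := x * g (nu+1) (x^2) / (2*(nu+1)).

Lemma Af_der nu (x : R) : 0 <= nu -> is_derive (Af nu) x (- Bf nu x).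
Proof. intros H. unfold Af. eapply D_eq. apply (D_comp (g nu) (fun t => t^2)).
  apply g_derive; auto. apply D_sq. unfold Bf. field; repeat split; lra. Qed.

Lemma Bf_der nu (x : R) : 0 <= nu ->
  is_derive (Bf nu) x (Af nu x - (2*nu+1)/(2*(nu+1)) * g (nu+1) (x^2)).
Proof. intros H. unfold Bf, Af.
  assert (D1 : is_derive (fun t => g (nu+1) (t^2)) x (2*x * (-(1/(4*(nu+1+1))) * g (nu+1+1) (x^2)))).
  { apply (D_comp (g (nu+1)) (fun t => t^2)). apply g_derive; lra. apply D_sq. }
  assert (D2 := D_mul (fun t => t) _ x _ _ (D_id x) D1).
  assert (D3 := D_mul _ (fun _ => /(2*(nu+1))) x _ _ D2 (D_const _ x)).
  eapply D_eq. exact D3. cbv beta.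
  pose proof (g_rec nu (x^2) H) as R. replace (nu+1+1) with (nu+2) by ring.
  replace (g nu (x^2)) with (g (nu + 1) (x ^ 2) - x ^ 2 / (4 * (nu + 1) * (nu + 2)) * g (nu + 2) (x ^ 2)) by lra.
  field; repeat split; lra. Qed.

Lemma Af_bound nu x : 0 <= nu -> 0 <= x -> Af nu x ^2 + Bf nu x ^2 <= 1.
Proof. intros H Hx.
  set (G := fun t => Af nu t ^2 + Bf nu t ^2).
  assert (DG : forall t, is_derive G t (- ((2*nu+1) * t * (g (nu+1) (t^2))^2 / (2*(nu+1)^2)))).
  { intros t. unfold G. eapply D_eq.
    apply (is_derive_plus (fun t => Af nu t ^2) (fun t => Bf nu t ^2)).
    apply (D_comp (fun u => u^2) (Af nu)). apply D_sq. apply Af_der; auto.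
    apply (D_comp (fun u => u^2) (Bf nu)). apply D_sq. apply Bf_der; auto.
    unfold plus; cbn -[g pow]. unfold Bf, Af. field; repeat split; lra. }
  destruct (Req_dec x 0) as [E|E].
  { subst. unfold Af, Bf. rewrite !pow_i by lia. rewrite g_0. lra. }
  destruct (MVT_cor2 G (fun t => - ((2*nu+1) * t * (g (nu+1) (t^2))^2 / (2*(nu+1)^2))) 0 x) as [c [Hc1 Hc2]].
  lra. intros c _. apply is_derive_Reals. apply DG.
  assert (G 0 = 1). { unfold G, Af, Bf. rewrite !pow_i by lia. rewrite g_0. lra. }
  assert (0 <= (2*nu+1) * c * (g (nu+1) (c^2))^2 / (2*(nu+1)^2)).
  { apply Rmult_le_pos. apply Rmult_le_pos. apply Rmult_le_pos; lra. apply pow2_ge_0.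
    left; apply Rinv_0_lt_compat. nra. }
  change (G x <= 1). nra. Qed.

Lemma g_bound nu y : 0 <= nu -> 0 <= y -> Rabs (g nu y) <= 1.
Proof. intros H Hy. pose proof (Af_bound nu (sqrt y) H (sqrt_pos y)).
  unfold Af in H0. rewrite pow2_sqrt in H0 by auto.
  apply Rabs_le. pose proof (pow2_ge_0 (Bf nu (sqrt y))). nra. Qed.

Lemma G_der nu (t : R) : 0 <= nu ->
  is_derive (fun t => Af nu t ^2 + Bf nu t ^2) t (- ((2*nu+1) * t * (g (nu+1) (t^2))^2 / (2*(nu+1)^2))).
Proof. intros H. eapply D_eq.
  apply (is_derive_plus (fun t => Af nu t ^2) (fun t => Bf nu t ^2)).
  apply (D_comp (fun u => u^2) (Af nu)). apply D_sq. apply Af_der; auto.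
  apply (D_comp (fun u => u^2) (Bf nu)). apply D_sq. apply Bf_der; auto.
  unfold plus; cbn -[g pow]. unfold Bf, Af. field; repeat split; lra. Qed.

Lemma nontriv nu x0 : 0 <= nu -> 0 < x0 -> 0 < Af nu x0 ^2 + Bf nu x0 ^2.
Proof. intros H Hx0.
  destruct (Rle_lt_dec (Af nu x0 ^2 + Bf nu x0 ^2) 0) as [Hle|]; auto. exfalso.
  pose proof (pow2_ge_0 (Af nu x0)). pose proof (pow2_ge_0 (Bf nu x0)).
  destruct (g_cont nu 0 H (1/2)) as [d [Hd Hc]]. lra.
  set (x1 := Rmin (x0/2) (Rmin (d/2) (1/2))).
  assert (x1p : 0 < x1). { unfold x1. repeat apply Rmin_glb_lt; lra. }
  assert (x1a : x1 <= x0/2) by apply Rmin_l.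
  assert (x1b : x1 <= d/2). { unfold x1. eapply Rle_trans. apply Rmin_r. apply Rmin_l. }
  assert (x1c : x1 <= 1/2). { unfold x1. eapply Rle_trans. apply Rmin_r. apply Rmin_r. }
  assert (HA : 1/2 < Af nu x1).
  { unfold Af. specialize (Hc (x1^2)). rewrite g_0 in Hc.
    assert (R_dist (g nu (x1^2)) 1 < 1/2). apply Hc. split. split. exact I.
    apply Rlt_not_eq. nra. change (R_dist (x1^2) 0 < d).
    unfold R_dist. rewrite Rminus_0_r, Rabs_right by (apply Rle_ge, pow2_ge_0). nra.
    unfold R_dist in H2. apply Rabs_def2 in H2. lra. }
  set (K := 2*(2*nu+1)/x1).
  set (Hf := fun t => (Af nu t ^2 + Bf nu t ^2) * exp (K*t)).
  destruct (MVT_cor2 Hf (fun t => - ((2*nu+1) * t * (g (nu+1) (t^2))^2 / (2*(nu+1)^2)) * exp (K*t)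
       + (Af nu t ^2 + Bf nu t ^2) * (K * exp (K*t))) x1 x0) as [c [Hc1 Hc2]]. lra.
  { intros c _. apply is_derive_Reals. unfold Hf.
    apply (D_mul (fun t => Af nu t ^2 + Bf nu t ^2) (fun t => exp (K*t))). apply G_der; auto.
    auto_derive; auto. ring. }
  assert (Hnn : 0 <= - ((2*nu+1) * c * (g (nu+1) (c^2))^2 / (2*(nu+1)^2)) * exp (K*c)
       + (Af nu c ^2 + Bf nu c ^2) * (K * exp (K*c))).
  { set (w := (2*nu+1) * (g (nu+1) (c^2))^2 / (2*(nu+1)^2)).
    assert (w0 : 0 <= w). { unfold w. apply Rmult_le_pos. apply Rmult_le_pos. lra. apply pow2_ge_0.
      left; apply Rinv_0_lt_compat. nra. }
    assert (E : K * Bf nu c ^2 = c^2 * w / x1). { unfold K, Bf, w. field. repeat split; lra. }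
    assert (E2 : (2*nu+1) * c * (g (nu+1) (c^2))^2 / (2*(nu+1)^2) = c * w). { unfold w. field. lra. }
    rewrite E2. pose proof (exp_pos (K*c)). pose proof (pow2_ge_0 (Af nu c)).
    assert (0 <= K). { unfold K. apply Rmult_le_pos. lra. left; apply Rinv_0_lt_compat; lra. }
    assert (c^2*w/x1 - c*w = c*w*(c-x1)/x1) by (field; lra).
    assert (0 <= c*w*(c-x1)/x1). { apply Rmult_le_pos. apply Rmult_le_pos. apply Rmult_le_pos; lra. lra.
      left; apply Rinv_0_lt_compat; lra. }
    assert (0 <= K * Af nu c ^2) by (apply Rmult_le_pos; auto).
    nra. }
  assert (Hf x0 = 0). { unfold Hf. replace (Af nu x0 ^ 2 + Bf nu x0 ^ 2) with 0 by lra. ring. }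
  assert (0 < Hf x1). { unfold Hf. apply Rmult_lt_0_compat. pose proof (pow2_ge_0 (Bf nu x1)). nra. apply exp_pos. }
  nra. Qed.

Lemma D_rpow (m t : R) : 0 < t -> is_derive (fun s => Rpower s m) t (m * Rpower t m / t).
Proof. intros Ht. eapply D_eq. apply is_derive_Reals, derivable_pt_lim_power; auto.
  unfold Rminus. rewrite Rpower_plus, Rpower_Ropp, Rpower_1 by auto. field. lra. Qed.

Definition Uf nu t := Rpower t (nu+1/2) * Af nu t.
Definition Vf nu t := Rpower t (nu+1/2) * Bf nu t.
Definition Qf nu t := Uf nu t ^2 + Vf nu t ^2 - 2*(nu+1/2) / t * (Uf nu t * Vf nu t).

Lemma U_der nu (t : R) : 0 <= nu -> 0 < t ->
  is_derive (Uf nu) t ((nu+1/2) * Uf nu t / t - Vf nu t).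
Proof. intros H Ht. eapply D_eq. apply (D_mul (fun s => Rpower s (nu+1/2)) (Af nu)).
  apply D_rpow; auto. apply Af_der; auto. unfold Uf, Vf. field. lra. Qed.

Lemma V_der nu (t : R) : 0 <= nu -> 0 < t ->
  is_derive (Vf nu) t (Uf nu t - (nu+1/2) * Vf nu t / t).
Proof. intros H Ht. eapply D_eq. apply (D_mul (fun s => Rpower s (nu+1/2)) (Bf nu)).
  apply D_rpow; auto. apply Bf_der; auto. unfold Uf, Vf, Bf. field. lra. Qed.

Lemma Q_der nu (t : R) : 0 <= nu -> 0 < t ->
  is_derive (Qf nu) t (2*(nu+1/2) * Uf nu t * Vf nu t / t^2).
Proof. intros H Ht. unfold Qf.
  assert (DI : is_derive (fun s : R => 2*(nu+1/2) / s) t (- (2*(nu+1/2)) / t^2)).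
  { auto_derive. lra. field. lra. }
  eapply D_eq.
  apply (is_derive_minus (fun s => Uf nu s ^2 + Vf nu s ^2) (fun s => 2*(nu+1/2)/s * (Uf nu s * Vf nu s))).
  apply (is_derive_plus (fun s => Uf nu s ^2) (fun s => Vf nu s ^2)).
  apply (D_comp (fun u => u^2) (Uf nu)). apply D_sq. apply U_der; auto.
  apply (D_comp (fun u => u^2) (Vf nu)). apply D_sq. apply V_der; auto.
  apply (D_mul (fun s => 2*(nu+1/2)/s) (fun s => Uf nu s * Vf nu s)). exact DI.
  apply (D_mul (Uf nu) (Vf nu)). apply U_der; auto. apply V_der; auto.
  unfold plus, minus, plus, opp; cbn -[Uf Vf pow]. field. lra. Qed.

Lemma Q_bounds nu t : 0 <= nu -> 2*(nu+1/2) <= t ->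
  (Uf nu t ^2 + Vf nu t ^2)/2 <= Qf nu t <= 3*(Uf nu t ^2 + Vf nu t ^2)/2
  /\ Uf nu t * Vf nu t <= (Uf nu t ^2 + Vf nu t ^2)/2
  /\ - (Uf nu t ^2 + Vf nu t ^2)/2 <= Uf nu t * Vf nu t.
Proof. intros H Ht. unfold Qf. set (U := Uf nu t). set (V := Vf nu t).
  set (a := 2*(nu+1/2)/t).
  assert (0 < a <= 1). { unfold a. split. apply Rdiv_lt_0_compat; lra.
    apply Rmult_le_reg_r with t. lra. field_simplify; lra. }
  pose proof (pow2_ge_0 (U-V)). pose proof (pow2_ge_0 (U+V)).
  assert (0 <= a*(U-V)^2) by (apply Rmult_le_pos; lra).
  assert (0 <= a*(U+V)^2) by (apply Rmult_le_pos; lra).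
  assert (0 <= (1-a)*(U^2+V^2)) by (apply Rmult_le_pos; nra).
  repeat split; nra. Qed.

Lemma asym nu : 0 <= nu -> exists C1 c0, 0 < c0 /\
  forall t, 2*(nu+1/2) <= t -> Uf nu t ^2 <= C1 /\ c0 <= Uf nu t ^2 + Vf nu t ^2.
Proof. intros H. set (m := nu+1/2). set (x0 := 2*m).
  assert (x0p : 0 < x0) by (unfold x0, m; lra).
  exists (2 * Qf nu x0 * exp 1), (2/3 * Qf nu x0 * exp (-1)).
  assert (Qp : 0 < Qf nu x0).
  { destruct (Q_bounds nu x0 H) as [[Q1 _] _]. unfold x0, m; lra.
    assert (0 < Uf nu x0 ^2 + Vf nu x0 ^2).
    { unfold Uf, Vf. pose proof (nontriv nu x0 H x0p). pose proof (exp_pos ((nu+1/2) * ln x0)).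
      unfold Rpower. replace ((exp ((nu + 1 / 2) * ln x0) * Af nu x0) ^ 2 + (exp ((nu + 1 / 2) * ln x0) * Bf nu x0) ^ 2)
        with (exp ((nu + 1 / 2) * ln x0) ^2 * (Af nu x0 ^ 2 + Bf nu x0 ^ 2)) by ring.
      apply Rmult_lt_0_compat; auto. nra. }
    lra. }
  split. pose proof (exp_pos (-1)). apply Rmult_lt_0_compat; lra.
  intros t Ht. destruct (Q_bounds nu t H Ht) as [[Q1 Q2] [UV1 UV2]].
  assert (ep : exp (2*m/x0) = exp 1) by (f_equal; unfold x0, m; field; lra).
  assert (em : exp (-(2*m/x0)) = exp (-1)) by (f_equal; unfold x0, m; field; lra).
  destruct (Req_dec t x0) as [E|E].
  { subst t. pose proof (exp_pos (-1)). split.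
    - assert (1 <= exp 1). { assert (exp 0 < exp 1) by (apply exp_increasing; lra). rewrite exp_0 in *; lra. }
      pose proof (pow2_ge_0 (Vf nu x0)).
      assert (2*Qf nu x0 * 1 <= 2*Qf nu x0*exp 1) by (apply Rmult_le_compat_l; lra). lra.
    - assert (exp (-1) <= 1). { assert (exp (-1) < exp 0) by (apply exp_increasing; lra). rewrite exp_0 in *; lra. }
      assert (2/3*Qf nu x0 * exp (-1) <= 2/3*Qf nu x0 * 1) by (apply Rmult_le_compat_l; lra). lra. }
  assert (Htp : x0 < t) by (unfold x0, m in *; lra).
  split.
  -
    destruct (MVT_cor2 (fun s => Qf nu s * exp (2*m/s))
      (fun s => 2*(nu+1/2) * Uf nu s * Vf nu s / s^2 * exp (2*m/s) + Qf nu s * (- (2*m)/s^2 * exp (2*m/s))) x0 t Htp)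
      as [c [Hc1 Hc2]].
    { intros c Hc. apply is_derive_Reals. apply (D_mul (Qf nu) (fun s => exp (2*m/s))).
      apply Q_der; auto; lra. auto_derive. lra. repeat change (RinvImpl.Rinv ?x) with (Rinv x). change (exp (2*m*/c)) with (exp (2*m/c)). unfold m. field. lra. }
    destruct (Q_bounds nu c H) as [[Qc1 Qc2] [UVc1 UVc2]]. unfold x0, m in *; lra.
    assert (0 < c) by lra.
    assert (D : 2*(nu+1/2) * Uf nu c * Vf nu c / c^2 * exp (2*m/c) + Qf nu c * (- (2*m)/c^2 * exp (2*m/c))
       = 2*m * exp (2*m/c) / c^2 * (Uf nu c * Vf nu c - Qf nu c)) by (unfold m; field; lra).
    assert (0 < 2*m * exp (2*m/c) / c^2). { apply Rdiv_lt_0_compat. apply Rmult_lt_0_compat; [unfold m; lra | apply exp_pos].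
      apply pow_lt; lra. }
    assert (Dn : 2*m * exp (2*m/c) / c^2 * (Uf nu c * Vf nu c - Qf nu c) <= 0).
    { apply Rmult_le_0_l... all: lra. }
    rewrite D in Hc1.
    assert (Qf nu t * exp (2*m/t) <= Qf nu x0 * exp 1).
    { rewrite <- ep. assert (0 <= t - x0) by lra.
      assert (2*m * exp (2*m/c) / c^2 * (Uf nu c * Vf nu c - Qf nu c) * (t - x0) <= 0).
      { apply Rmult_le_0_r; lra. } lra. }
    assert (1 <= exp (2*m/t)). { assert (exp 0 < exp (2*m/t)).
      { apply exp_increasing. apply Rdiv_lt_0_compat; unfold m; lra. } rewrite exp_0 in *; lra. }
    assert (0 <= Qf nu t) by (pose proof (pow2_ge_0 (Uf nu t)); pose proof (pow2_ge_0 (Vf nu t)); lra).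
    assert (Qf nu t * 1 <= Qf nu t * exp (2*m/t)) by (apply Rmult_le_compat_l; lra).
    pose proof (pow2_ge_0 (Vf nu t)). lra.
  - destruct (MVT_cor2 (fun s => Qf nu s * exp (-(2*m/s)))
      (fun s => 2*(nu+1/2) * Uf nu s * Vf nu s / s^2 * exp (-(2*m/s)) + Qf nu s * ((2*m)/s^2 * exp (-(2*m/s)))) x0 t Htp)
      as [c [Hc1 Hc2]].
    { intros c Hc. apply is_derive_Reals. apply (D_mul (Qf nu) (fun s => exp (-(2*m/s)))).
      apply Q_der; auto; lra. auto_derive. lra. repeat change (RinvImpl.Rinv ?x) with (Rinv x).
      change (exp (- (2*m*/c))) with (exp (-(2*m/c))). unfold m. field. lra. }
    destruct (Q_bounds nu c H) as [[Qc1 Qc2] [UVc1 UVc2]]. unfold x0, m in *; lra.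
    assert (0 < c) by lra.
    assert (D : 2*(nu+1/2) * Uf nu c * Vf nu c / c^2 * exp (-(2*m/c)) + Qf nu c * ((2*m)/c^2 * exp (-(2*m/c)))
       = 2*m * exp (-(2*m/c)) / c^2 * (Uf nu c * Vf nu c + Qf nu c)) by (unfold m; field; lra).
    assert (0 < 2*m * exp (-(2*m/c)) / c^2). { apply Rdiv_lt_0_compat. apply Rmult_lt_0_compat; [unfold m; lra | apply exp_pos].
      apply pow_lt; lra. }
    rewrite D in Hc1.
    assert (Qf nu x0 * exp (-1) <= Qf nu t * exp (-(2*m/t))).
    { rewrite <- em. assert (0 <= t - x0) by lra.
      assert (0 <= 2*m * exp (-(2*m/c)) / c^2 * (Uf nu c * Vf nu c + Qf nu c) * (t - x0)).
      { apply Rmult_le_pos; try lra. apply Rmult_le_pos; lra. } lra. }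
    assert (exp (-(2*m/t)) <= 1). { assert (exp (-(2*m/t)) < exp 0).
      { apply exp_increasing. assert (0 < 2*m/t) by (apply Rdiv_lt_0_compat; unfold m; lra). lra. } rewrite exp_0 in *; lra. }
    assert (0 <= Qf nu t) by (pose proof (pow2_ge_0 (Uf nu t)); pose proof (pow2_ge_0 (Vf nu t)); lra).
    assert (Qf nu t * exp (-(2*m/t)) <= Qf nu t * 1) by (apply Rmult_le_compat_l; lra).
    lra.
Qed.

Lemma osc nu : 0 <= nu -> exists d, 0 < d /\ forall s, 2*(nu+1/2) <= s ->
  exists x, s <= x <= s + 3/4 /\ d <= Rabs (Uf nu x).
Proof. intros H. destruct (asym nu H) as [C1 [c0 [c0p Hb]]].
  set (d := sqrt c0 / 5). assert (dp : 0 < d) by (unfold d; pose proof (sqrt_lt_R0 c0 c0p); lra).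
  assert (dd : c0 = 25 * d^2). { unfold d. replace ((sqrt c0 / 5)^2) with (sqrt c0 * sqrt c0 / 25) by field.
    rewrite sqrt_sqrt; lra. }
  exists d. split; auto. intros s Hs.
  apply NNPP. intros Hn.
  assert (Hall : forall x, s <= x <= s + 3/4 -> Rabs (Uf nu x) < d).
  { intros x Hx. apply Rnot_le_lt. intros Hle. apply Hn. exists x. auto. }
  set (m := nu + 1/2) in *. assert (mp : 0 < m) by (unfold m; lra).
  destruct (MVT_cor2 (Uf nu) (fun x => m * Uf nu x / x - Vf nu x) s (s+3/4)) as [c [Hc1 Hc2]]. lra.
  { intros c Hc. apply is_derive_Reals. apply U_der; auto. unfold m in *; lra. }
  assert (HUc := Hall c ltac:(lra)).
  destruct (Hb c ltac:(lra)) as [_ Hc0].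
  assert (H1 := Hall s ltac:(lra)). assert (H2 := Hall (s+3/4) ltac:(lra)).
  assert (Uc2 : Uf nu c ^2 < d^2). { apply Rabs_def2 in HUc. nra. }
  assert (V4 : 4*d <= Rabs (Vf nu c)).
  { rewrite <- (Rabs_right (4*d)) by lra. apply (Rsqr_le_abs_0 (4*d) (Vf nu c)). unfold Rsqr. nra. }
  assert (aU : Rabs (m * Uf nu c / c) <= d/2).
  { replace (m * Uf nu c / c) with ((m/c) * Uf nu c) by (field; lra).
    rewrite Rabs_mult. assert (0 < m/c <= 1/2). { split. apply Rdiv_lt_0_compat; unfold m in *; lra.
      apply Rmult_le_reg_r with c. lra. field_simplify; unfold m in *; lra. }
    rewrite (Rabs_right (m/c)) by lra. nra. }
  assert (W : 3.5*d <= Rabs (m * Uf nu c / c - Vf nu c)).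
  { pose proof (Rabs_triang_inv (Vf nu c) (m * Uf nu c / c)). rewrite <- Rabs_Ropp.
    replace (- (m * Uf nu c / c - Vf nu c)) with (Vf nu c - m * Uf nu c / c) by ring. lra. }
  assert (Rabs (Uf nu (s + 3/4) - Uf nu s) < 2*d).
  { pose proof (Rabs_triang (Uf nu (s+3/4)) (- Uf nu s)). rewrite Rabs_Ropp in H0. unfold Rminus. lra. }
  rewrite Hc1 in H0. rewrite Rabs_mult in H0.
  rewrite (Rabs_right (s + 3/4 - s)) in H0 by lra. lra. Qed.

Lemma rpow_pos (x s : R) : 0 < x -> rpow x s = Rpower x s.
Proof. intros H. unfold rpow. destruct (Rle_dec x 0); auto. lra. Qed.
Lemma rpow_le0 (x s : R) : x <= 0 -> rpow x s = 0.
Proof. intros H. unfold rpow. destruct (Rle_dec x 0); auto. lra. Qed.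
Lemma rpow_nonneg (x s : R) : 0 <= rpow x s.
Proof. unfold rpow. destruct (Rle_dec x 0). lra. left; apply exp_pos. Qed.

Lemma rpow_mono (x y s : R) : 0 <= x <= y -> 0 <= s -> rpow x s <= rpow y s.
Proof. intros H Hs. destruct (Rle_lt_dec x 0). rewrite rpow_le0 by auto. apply rpow_nonneg.
  rewrite !rpow_pos by lra. apply Rle_Rpower_l; auto; lra. Qed.

Lemma rpow_x (x s : R) : 0 <= x -> rpow x s = x * rpow x (s-1).
Proof. intros H. destruct (Req_dec x 0). subst. rewrite !rpow_le0 by lra. ring.
  rewrite !rpow_pos by lra. replace s with (1 + (s-1)) at 1 by ring. rewrite Rpower_plus, Rpower_1; lra. Qed.

Lemma Rpower_le_sq (h s : R) : 0 < h <= 1 -> 2 <= s -> Rpower h s <= h^2.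
Proof. intros H Hs. replace s with (INR 2 + (s-2)) by (simpl; ring).
  rewrite Rpower_plus, Rpower_pow by lra.
  assert (Rpower h (s-2) <= 1).
  { unfold Rpower. assert (ln h <= 0) by (rewrite <- ln_1; apply ln_le; lra).
    destruct (Req_dec ((s-2) * ln h) 0) as [E|E]. rewrite E, exp_0; lra.
    assert (exp ((s-2)*ln h) < exp 0) by (apply exp_increasing; nra). rewrite exp_0 in H1; lra. }
  pose proof (pow2_ge_0 h). pose proof (exp_pos ((s-2)*ln h)). unfold Rpower in *. nra. Qed.

Lemma rpow_derive (s x : R) : 2 <= s -> 0 <= x -> is_derive (fun t => rpow t s) x (s * rpow x (s-1)).
Proof. intros Hs Hx. apply is_derive_Reals. destruct (Req_dec x 0) as [E|E].
  - subst. rewrite (rpow_le0 0) by lra. rewrite Rmult_0_r.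
    intros eps Heps. exists (mkposreal (Rmin eps 1) ltac:(apply Rmin_glb_lt; lra)).
    intros h Hh Hd. simpl in Hd. rewrite Rplus_0_l, (rpow_le0 0) by lra.
    assert (Hd1 : Rabs h < eps) by (eapply Rlt_le_trans; [exact Hd| apply Rmin_l]).
    assert (Hd2 : Rabs h < 1) by (eapply Rlt_le_trans; [exact Hd| apply Rmin_r]).
    destruct (Rle_lt_dec h 0).
    + rewrite rpow_le0 by auto. replace ((0 - 0) / h - 0) with 0 by (field; lra). rewrite Rabs_R0; lra.
    + rewrite rpow_pos by auto. rewrite Rabs_right in Hd1, Hd2 by lra.
      pose proof (Rpower_le_sq h s ltac:(lra) Hs). pose proof (exp_pos (s * ln h)).
      rewrite Rminus_0_r, Rminus_0_r. rewrite Rabs_right.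
      apply Rmult_lt_reg_r with h. lra. unfold Rdiv. rewrite Rmult_assoc, Rinv_l by lra.
      unfold Rpower in *. nra.
      apply Rle_ge. replace ((Rpower h s - 0)/h - 0) with (Rpower h s / h) by (field; lra).
      apply Rlt_le, Rdiv_lt_0_compat; [apply exp_pos|lra].
  - apply (derivable_pt_lim_locally_ext (fun t => Rpower t s) _ x 0 (x+1)). lra.
    intros z Hz. rewrite rpow_pos; lra.
    rewrite rpow_pos by lra. apply derivable_pt_lim_power; lra. Qed.

Lemma rpow_cont (s x : R) : 2 <= s -> 0 <= x -> continuous (fun t => rpow t s) x.
Proof. intros. apply (ex_derive_continuous (fun t : R => rpow t s)). eexists. apply rpow_derive; auto. Qed.

Lemma g_continuous nu (y : R) : 0 <= nu -> continuous (g nu) y.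
Proof. intros H. apply continuity_pt_filterlim. apply g_cont; auto. Qed.

Lemma RInt_defs f a b v : is_RInt f a b v -> Defs.RInt f a b = v.
Proof. intros H. assert (Hp : Riemann_integrable f a b) by (apply ex_RInt_Reals_0; eexists; eauto).
  unfold Defs.RInt.
  destruct (epsilon_spec (inhabits 0) (fun l => exists pr : Riemann_integrable f a b, RiemannInt pr = l)) as [pr E].
  exists (RiemannInt Hp). exists Hp. auto.
  rewrite <- E. rewrite <- RInt_Reals. apply is_RInt_unique; auto. Qed.

Lemma rpow_1 s : rpow 1 s = 1.
Proof. rewrite rpow_pos by lra. unfold Rpower. rewrite ln_1, Rmult_0_r, exp_0. auto. Qed.

Lemma hat_eq al lam : 1/2 <= al -> hat_ind01 al lam = g (al+1) (lam^2) / (2*al+2).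
Proof. intros Hal.
  set (Phi := fun x : R => rpow x (2*al+2) * g (al+1) ((lam*x)^2) * / (2*al+2)).
  set (df := fun x : R => rpow x (2*al+1) * g al ((lam*x)^2)).
  assert (HD : forall x, 0 <= x -> is_derive Phi x (df x)).
  { intros x Hx. unfold Phi, df.
    assert (D1 : is_derive (fun t => g (al+1) ((lam*t)^2)) x
       (2*lam*(lam*x) * (-(1/(4*(al+1+1))) * g (al+1+1) ((lam*x)^2)))).
    { apply (D_comp (g (al+1)) (fun t => (lam*t)^2)). apply g_derive; lra. auto_derive; auto. ring. }
    assert (D2 := D_mul (fun t => rpow t (2*al+2)) _ x _ _ (rpow_derive (2*al+2) x ltac:(lra) Hx) D1).
    assert (D3 := D_mul _ (fun _ => /(2*al+2)) x _ _ D2 (D_const _ x)).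
    eapply D_eq. exact D3. cbv beta.
    pose proof (g_rec al ((lam*x)^2) ltac:(lra)) as R.
    replace (al+1+1) with (al+2) by ring.
    rewrite (rpow_x x (2*al+2)) by auto. replace (2*al+2-1) with (2*al+1) by ring.
    replace (g al ((lam*x)^2)) with (g (al + 1) ((lam*x) ^ 2) - (lam*x) ^ 2 / (4 * (al + 1) * (al + 2)) * g (al + 2) ((lam*x) ^ 2)) by lra.
    field. lra. }
  assert (HC : forall x, 0 <= x -> continuous df x).
  { intros x Hx. unfold df. apply (continuous_mult (fun t => rpow t (2*al+1)) (fun t => g al ((lam*t)^2))).
    apply rpow_cont; auto; lra.
    apply (continuous_comp (fun t => (lam*t)^2) (g al)).
    apply (ex_derive_continuous (fun t : R => (lam*t)^2)). auto_derive; auto.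
    apply g_continuous; lra. }
  assert (HI : is_RInt df 0 1 (minus (Phi 1) (Phi 0))).
  { apply (is_RInt_derive Phi df 0 1). intros x Hx. rewrite Rmin_left, Rmax_right in Hx by lra. apply HD; lra.
    intros x Hx. rewrite Rmin_left, Rmax_right in Hx by lra. apply HC; lra. }
  assert (E : minus (Phi 1) (Phi 0) = g (al+1) (lam^2) / (2*al+2)).
  { unfold minus, plus, opp, Phi; cbn -[rpow g pow]. rewrite rpow_1, (rpow_le0 0) by lra.
    replace (lam*1) with lam by ring. field. lra. }
  rewrite E in HI.
  unfold hat_ind01. apply RInt_defs.
  eapply is_RInt_ext. 2: exact HI.
  { intros x Hx. rewrite Rmin_left, Rmax_right in Hx by lra. unfold df, ind01, haar_density.
    destruct (Rle_dec 0 x); [|lra]. destruct (Rlt_dec x 1); [|lra].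
    rewrite j_alpha_g by lra. rewrite Rmult_1_l. apply Rmult_comm. } Qed.

Lemma omega_bounds al n : 1/2 <= al -> (1 <= n)%nat ->
  rpow (INR n - 1) (2*al+1) <= omega_n al n <= rpow (INR n) (2*al+1).
Proof. intros Hal Hn. pose proof (le_INR _ _ Hn) as Hn'. simpl in Hn'.
  assert (HI : ex_RInt (haar_density al) (INR n - 1) (INR n)).
  { eexists. apply is_RInt_derive with (f := fun x => rpow x (2*al+2) / (2*al+2)).
    intros x Hx. rewrite Rmin_left, Rmax_right in Hx by lra.
    eapply D_eq. apply (D_mul (fun t => rpow t (2*al+2)) (fun _ => /(2*al+2))).
    apply rpow_derive; lra. apply D_const. unfold haar_density.
    replace (2*al+2-1) with (2*al+1) by ring. field. lra.
    intros x Hx. rewrite Rmin_left, Rmax_right in Hx by lra. apply rpow_cont; lra. }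
  destruct HI as [v Hv].
  unfold omega_n. rewrite (RInt_defs _ _ _ v Hv). rewrite <- (is_RInt_unique _ _ _ _ Hv).
  split.
  - replace (rpow (INR n - 1) (2*al+1)) with (RInt (fun _ => rpow (INR n - 1) (2*al+1)) (INR n - 1) (INR n)).
    2:{ rewrite RInt_const. unfold scal; simpl; unfold mult; simpl. ring. }
    apply RInt_le. lra. apply ex_RInt_const. eexists; eauto.
    intros x Hx. apply rpow_mono; lra.
  - replace (rpow (INR n) (2*al+1)) with (RInt (fun _ => rpow (INR n) (2*al+1)) (INR n - 1) (INR n)).
    2:{ rewrite RInt_const. unfold scal; simpl; unfold mult; simpl. ring. }
    apply RInt_le. lra. eexists; eauto. apply ex_RInt_const.
    intros x Hx. apply rpow_mono; lra. Qed.

Lemma Rpower_anti_base (x y s : R) : 0 < x <= y -> 0 <= s -> Rpower y (-s) <= Rpower x (-s).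
Proof. intros H Hs. rewrite !Rpower_Ropp. apply Rinv_le_contravar. apply exp_pos.
  apply Rle_Rpower_l; lra. Qed.

Lemma pseries_step s k : 1 < s ->
  Rpower (INR k + 2) (-s) <= (Rpower (INR k + 1) (1-s) - Rpower (INR k + 2) (1-s)) / (s-1).
Proof. intros Hs. pose proof (pos_INR k).
  destruct (MVT_cor2 (fun x => Rpower x (1-s)) (fun x => (1-s) * Rpower x (1-s-1)) (INR k + 1) (INR k + 2))
    as [c [Hc1 Hc2]]. lra.
  { intros c Hc. apply derivable_pt_lim_power. lra. }
  replace (1-s-1) with (-s) in Hc1 by ring.
  assert (Rpower (INR k + 2) (-s) <= Rpower c (-s)) by (apply Rpower_anti_base; lra).
  apply Rmult_le_reg_r with (s-1). lra. unfold Rdiv. rewrite Rmult_assoc, Rinv_l, Rmult_1_r by lra.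
  replace (Rpower (INR k + 1) (1 - s) - Rpower (INR k + 2) (1 - s)) with
    (- (Rpower (INR k + 2) (1 - s) - Rpower (INR k + 1) (1 - s))) by ring.
  rewrite Hc1. replace (INR k + 2 - (INR k + 1)) with 1 by ring. nra. Qed.

Lemma pseries_conv s : 1 < s -> ex_series (fun k => Rpower (INR k + 1) (-s)).
Proof. intros Hs. set (a := fun k => Rpower (INR k + 1) (-s)).
  assert (Hb : forall n, sum_f_R0 a n <= 1 + (1 - Rpower (INR n + 1) (1-s))/(s-1)).
  { induction n. simpl sum_f_R0. unfold a. replace (INR 0+1) with 1 by (simpl; ring).
    unfold Rpower. rewrite ln_1, !Rmult_0_r, exp_0. replace ((1-1)/(s-1)) with 0 by (field; lra). lra.
    simpl sum_f_R0. pose proof (pseries_step s n Hs). unfold a at 2. rewrite S_INR.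
    replace (INR n + 1 + 1) with (INR n + 2) by ring.
    assert ((1 - Rpower (INR n + 1) (1 - s)) / (s - 1) + (Rpower (INR n + 1) (1 - s) - Rpower (INR n + 2) (1 - s)) / (s - 1)
       = (1 - Rpower (INR n + 2) (1 - s)) / (s - 1)) by (field; lra). lra. }
  assert (Hg : Un_growing (sum_f_R0 a)).
  { intros n. simpl. unfold a. pose proof (exp_pos (- s * ln (INR (S n) + 1))). unfold Rpower. lra. }
  assert (Hu : has_ub (sum_f_R0 a)).
  { exists (1 + 1/(s-1)). intros x [n ->]. eapply Rle_trans. apply Hb.
    pose proof (exp_pos ((1-s) * ln (INR n + 1))). unfold Rpower.
    assert ((1 - exp ((1 - s) * ln (INR n + 1))) / (s - 1) <= 1/(s-1)).
    { unfold Rdiv. apply Rmult_le_compat_r. left; apply Rinv_0_lt_compat; lra. lra. } lra. }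
  destruct (growing_cv _ Hg Hu) as [l Hl]. exists l. apply is_series_Reals. exact Hl. Qed.

Lemma harmonic_div : ~ ex_series (fun k => / (INR k + 1)).
Proof. intros [l Hl]. apply is_series_Reals in Hl.
  assert (Hb : forall n, ln (INR n + 2) <= sum_f_R0 (fun k => / (INR k + 1)) n).
  { induction n. simpl. replace (0+2) with 2 by ring. replace (0+1) with 1 by ring. rewrite Rinv_1.
    rewrite <- ln_exp with 1. apply ln_le. lra. pose proof (exp_ineq1 1 ltac:(lra)). lra.
    simpl sum_f_R0. rewrite S_INR. pose proof (pos_INR n).
    assert (ln (INR n + 1 + 2) - ln (INR n + 2) <= / (INR n + 1 + 1)).
    { rewrite <- ln_div by lra. replace ((INR n + 1 + 2) / (INR n + 2)) with (1 + /(INR n + 2)) by (field; lra).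
      replace (INR n + 1 + 1) with (INR n + 2) by ring.
      assert (Hp : 0 < /(INR n + 2)) by (apply Rinv_0_lt_compat; lra).
      rewrite <- (ln_exp (/(INR n + 2))) at 2. apply ln_le. lra.
      pose proof (exp_ineq1 (/(INR n + 2)) ltac:(lra)). lra. }
    replace (match n with | 0%nat => 1 | S _ => INR n + 1 end) with (INR (S n)) by reflexivity.
    rewrite S_INR. lra. }
  destruct (Hl 1 ltac:(lra)) as [N HN].
  destruct (archimed (exp (l+1))) as [A _].
  set (n := Nat.max N (Z.to_nat (up (exp (l+1))))).
  assert (HnN : (N <= n)%nat) by apply Nat.le_max_l.
  specialize (HN n HnN). unfold R_dist in HN. apply Rabs_def2 in HN.
  assert (exp (l+1) < INR n + 2).
  { assert (IZR (up (exp (l+1))) <= INR n).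
    { assert (0 <= up (exp (l+1)))%Z. { apply le_IZR. pose proof (exp_pos (l+1)). lra. }
      rewrite <- (Z2Nat.id _ H), <- INR_IZR_INZ. apply le_INR, Nat.le_max_r. }
    lra. }
  assert (l + 1 < ln (INR n + 2)). { rewrite <- (ln_exp (l+1)). apply ln_increasing; auto. apply exp_pos. }
  specialize (Hb n). lra. Qed.

Lemma Rpower_mul (x y z : R) : 0 < x -> 0 < y -> Rpower (x*y) z = Rpower x z * Rpower y z.
Proof. intros. unfold Rpower. rewrite ln_mult by auto. rewrite Rmult_plus_distr_l, exp_plus. auto. Qed.
Lemma Rpower_pos (x z : R) : 0 < Rpower x z.
Proof. apply exp_pos. Qed.

Lemma hat_Af al lam : 1/2 <= al -> hat_ind01 al lam = Af (al+1) lam / (2*al+2).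
Proof. intros. rewrite hat_eq by auto. reflexivity. Qed.

Lemma hat_bound al lam : 1/2 <= al -> Rabs (hat_ind01 al lam) <= 1/(2*al+2).
Proof. intros H. rewrite hat_eq by auto. unfold Rdiv. rewrite Rabs_mult, (Rabs_right (/ (2*al+2))).
  2:{ apply Rle_ge, Rlt_le, Rinv_0_lt_compat; lra. }
  pose proof (g_bound (al+1) (lam^2) ltac:(lra) (pow2_ge_0 lam)).
  apply Rmult_le_compat_r. left; apply Rinv_0_lt_compat; lra. lra. Qed.

Lemma upper al q : 1/2 <= al -> 0 <= q -> exists D N, 0 <= D /\ (2 <= N)%nat /\
  forall (n : nat) lam, (N <= n)%nat -> INR n - 1 <= lam ->
    rpow (Rabs (hat_ind01 al lam)) q <= D * Rpower (INR n) (- ((al+3/2)*q)).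
Proof. intros Hal Hq. destruct (asym (al+1) ltac:(lra)) as [C1 [c0 [_ Hb]]].
  set (m := al+3/2). set (K := sqrt (Rmax C1 0) / (2*al+2) + 1).
  assert (Kp : 0 < K). { unfold K. pose proof (sqrt_pos (Rmax C1 0)).
    assert (0 <= sqrt (Rmax C1 0) / (2*al+2)) by (apply Rdiv_le_0_compat; lra). lra. }
  exists (Rpower K q * Rpower 2 (m*q)).
  destruct (archimed (2*m+1)) as [A _].
  assert (0 <= up (2*m+1))%Z by (apply le_IZR; unfold m in *; lra).
  exists (Nat.max 2 (Z.to_nat (up (2*m+1)))). repeat split.
  { left. apply Rmult_lt_0_compat; apply Rpower_pos. }
  { apply Nat.le_max_l. }
  intros n lam Hn Hlam.
  assert (Hn1 : IZR (up (2*m+1)) <= INR n).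
  { rewrite <- (Z2Nat.id _ H), <- INR_IZR_INZ. apply le_INR. eapply Nat.le_trans; [apply Nat.le_max_r|exact Hn]. }
  assert (Hn2 : 2 <= INR n). { replace 2 with (INR 2) by (simpl; ring). apply le_INR. eapply Nat.le_trans; [apply Nat.le_max_l|exact Hn]. }
  assert (Hl1 : 2*(al+1+1/2) <= lam) by (unfold m in *; lra).
  assert (Hl2 : INR n / 2 <= lam) by lra.
  assert (lp : 0 < lam) by lra.
  destruct (Hb lam Hl1) as [HU _].
  assert (HA : Rabs (hat_ind01 al lam) <= K * Rpower lam (-m)).
  { rewrite hat_Af by auto. unfold Uf in HU.
    assert (Rabs (Rpower lam (al+1+1/2) * Af (al+1) lam) <= sqrt (Rmax C1 0)).
    { rewrite <- sqrt_Rsqr_abs. apply sqrt_le_1. apply Rle_0_sqr. apply Rmax_r.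
      unfold Rsqr. eapply Rle_trans. 2: apply Rmax_l. simpl in HU. lra. }
    rewrite Rabs_mult, (Rabs_right (Rpower _ _)) in H0 by (apply Rle_ge, Rlt_le, Rpower_pos).
    replace (al+1+1/2) with m in H0 by (unfold m; lra).
    unfold Rdiv. rewrite Rabs_mult, (Rabs_right (/ _)) by (apply Rle_ge, Rlt_le, Rinv_0_lt_compat; lra).
    rewrite Rpower_Ropp. unfold K.
    assert (Rabs (Af (al+1) lam) <= sqrt (Rmax C1 0) * / Rpower lam m).
    { apply Rmult_le_reg_l with (Rpower lam m). apply Rpower_pos.
      replace (Rpower lam m * (sqrt (Rmax C1 0) * / Rpower lam m)) with (sqrt (Rmax C1 0)).
      lra. field. apply Rgt_not_eq, Rpower_pos. }
    assert (0 <= / Rpower lam m) by (left; apply Rinv_0_lt_compat, Rpower_pos).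
    assert (0 < / (2*al+2)) by (apply Rinv_0_lt_compat; lra).
    replace ((sqrt (Rmax C1 0) / (2 * al + 2) + 1) * / Rpower lam m) with
      (sqrt (Rmax C1 0) * / Rpower lam m * / (2*al+2) + / Rpower lam m) by (field; split; [apply Rgt_not_eq, Rpower_pos|lra]).
    nra. }
  assert (HA2 : K * Rpower lam (-m) <= K * Rpower (INR n / 2) (-m)).
  { apply Rmult_le_compat_l. lra. apply Rpower_anti_base. lra. unfold m; lra. }
  eapply Rle_trans. apply rpow_mono. split. apply Rabs_pos. eapply Rle_trans; [exact HA|exact HA2]. auto.
  rewrite rpow_pos by (apply Rmult_lt_0_compat; [lra|apply Rpower_pos]).
  rewrite Rpower_mul by (try lra; apply Rpower_pos). rewrite Rpower_mult.
  unfold Rdiv. rewrite Rpower_mul by (try lra; apply Rinv_0_lt_compat; lra).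
  replace (- m * q) with (- (m*q)) by ring.
  assert (Rpower (/ 2) (- (m * q)) = Rpower 2 (m*q)).
  { unfold Rpower. rewrite ln_Rinv by lra. f_equal. ring. }
  rewrite H0. right. ring. Qed.

Lemma lower al q : 1/2 <= al -> 0 <= q -> exists c N, 0 < c /\ (2 <= N)%nat /\
  forall (n : nat), (N <= n)%nat -> exists lam, INR n - 1 <= lam < INR n /\
    c * Rpower (INR n) (- ((al+3/2)*q)) <= rpow (Rabs (hat_ind01 al lam)) q.
Proof. intros Hal Hq. destruct (osc (al+1) ltac:(lra)) as [d [dp Hd]].
  set (m := al+3/2).
  exists (Rpower (d/(2*al+2)) q).
  destruct (archimed (2*m+1)) as [A _].
  assert (0 <= up (2*m+1))%Z by (apply le_IZR; unfold m in *; lra).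
  exists (Nat.max 2 (Z.to_nat (up (2*m+1)))). repeat split.
  { apply Rpower_pos. }
  { apply Nat.le_max_l. }
  intros n Hn.
  assert (Hn1 : IZR (up (2*m+1)) <= INR n).
  { rewrite <- (Z2Nat.id _ H), <- INR_IZR_INZ. apply le_INR. eapply Nat.le_trans; [apply Nat.le_max_r|exact Hn]. }
  destruct (Hd (INR n - 1) ltac:(unfold m in *; lra)) as [x [Hx1 Hx2]].
  exists x. split. lra.
  assert (xp : 0 < x) by (unfold m in *; lra).
  unfold Uf in Hx2. rewrite Rabs_mult, (Rabs_right (Rpower _ _)) in Hx2 by (apply Rle_ge, Rlt_le, Rpower_pos).
  replace (al+1+1/2) with m in Hx2 by (unfold m; lra).
  assert (HP : Rpower x m <= Rpower (INR n) m) by (apply Rle_Rpower_l; unfold m in *; lra).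
  assert (HA : d * Rpower (INR n) (-m) <= Rabs (Af (al+1) x)).
  { rewrite Rpower_Ropp. apply Rmult_le_reg_l with (Rpower (INR n) m). apply Rpower_pos.
    replace (Rpower (INR n) m * (d * / Rpower (INR n) m)) with d by (field; apply Rgt_not_eq, Rpower_pos).
    pose proof (Rabs_pos (Af (al+1) x)). nra. }
  assert (HH : d / (2*al+2) * Rpower (INR n) (-m) <= Rabs (hat_ind01 al x)).
  { rewrite hat_Af by auto. unfold Rdiv. rewrite Rabs_mult, (Rabs_right (/ (2*al+2))) by (apply Rle_ge, Rlt_le, Rinv_0_lt_compat; lra).
    assert (0 < / (2*al+2)) by (apply Rinv_0_lt_compat; lra).
    replace (d * / (2 * al + 2) * Rpower (INR n) (- m)) with (d * Rpower (INR n) (- m) * / (2*al+2)) by ring.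
    apply Rmult_le_compat_r; lra. }
  eapply Rle_trans. 2: apply rpow_mono; [split; [|exact HH]|exact Hq].
  rewrite rpow_pos by (apply Rmult_lt_0_compat; [apply Rdiv_lt_0_compat; lra|apply Rpower_pos]).
  rewrite Rpower_mul by (try apply Rpower_pos; apply Rdiv_lt_0_compat; lra).
  rewrite Rpower_mult. replace (-m*q) with (-(m*q)) by ring. lra.
  apply Rmult_le_pos. apply Rdiv_le_0_compat; lra. left; apply Rpower_pos. Qed.

Lemma normR (x : R) : norm x = Rabs x.
Proof. reflexivity. Qed.

Lemma sup_bounded al q n : 1/2 <= al -> 0 <= q -> bound (sup_set (hat_ind01 al) q n).
Proof. intros. exists (rpow (1/(2*al+2)) q). intros y [lam [_ ->]].
  apply rpow_mono; auto. split. apply Rabs_pos. apply hat_bound; auto. Qed.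

Lemma sup_ne al q n : exists y, sup_set (hat_ind01 al) q n y.
Proof. eexists. exists (INR n - 1/2). split. lra. reflexivity. Qed.

Lemma lub_nonneg al q n M : is_lub (sup_set (hat_ind01 al) q n) M -> 0 <= M.
Proof. intros [H _]. eapply Rle_trans. apply (rpow_nonneg (Rabs (hat_ind01 al (INR n - 1/2))) q).
  apply H. exists (INR n - 1/2). split. lra. reflexivity. Qed.

Lemma omega_nonneg al n : 1/2 <= al -> (1 <= n)%nat -> 0 <= omega_n al n.
Proof. intros. destruct (omega_bounds al n H H0). pose proof (rpow_nonneg (INR n - 1) (2*al+1)). lra. Qed.

Lemma ex_series_to_sum (a : nat -> R) : ex_series a -> exists l, infinite_sum a l.
Proof. intros [l Hl]. exists l. apply is_series_Reals. auto. Qed.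

Lemma if_dir al q : 1/2 <= al -> 1 <= q -> q > 2*(al+1)/(al+3/2) -> finite_Linf_lq al q (hat_ind01 al).
Proof. intros Hal Hq Hqq.
  set (M := fun n => proj1_sig (completeness _ (sup_bounded al q n Hal ltac:(lra)) (sup_ne al q n))).
  assert (HM : forall n, is_lub (sup_set (hat_ind01 al) q n) (M n)).
  { intros n. unfold M. destruct (completeness _ _ _). simpl. auto. }
  exists M. split. intros; apply HM.
  destruct (upper al q Hal ltac:(lra)) as [D [N [D0 [N2 HU]]]].
  set (m := al + 3/2) in *. set (s := m*q - (2*al+1)).
  assert (Hs : 1 < s).
  { unfold s. assert (2*(al+1)/m * m = 2*(al+1)) by (field; unfold m; lra).
    assert (0 < m) by (unfold m; lra). nra. }
  apply ex_series_to_sum.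
  apply (ex_series_incr_n _ N).
  apply (@ex_series_le R_AbsRing R_CompleteNormedModule _ (fun k => D * Rpower (INR (N+k) + 1) (-s))).
  2:{ apply (ex_series_scal D (fun k => Rpower (INR (N+k) + 1) (-s))).
      apply (ex_series_incr_n (fun k => Rpower (INR k + 1) (-s)) N). apply pseries_conv; auto. }
  intros k. rewrite normR. cbv beta.
  assert (Hk1 : (1 <= S (N+k))%nat) by lia.
  pose proof (omega_nonneg al _ Hal Hk1). pose proof (lub_nonneg _ _ _ _ (HM (S (N+k)))).
  rewrite Rabs_right by (apply Rle_ge, Rmult_le_pos; auto).
  destruct (omega_bounds al _ Hal Hk1) as [_ Ho].
  rewrite S_INR in Ho. pose proof (pos_INR (N+k)).
  rewrite rpow_pos in Ho by lra.
  assert (HMb : M (S (N+k)) <= D * Rpower (INR (S (N+k))) (- (m*q))).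
  { destruct (HM (S (N+k))) as [_ Hlub]. apply Hlub. intros y [lam [Hlam ->]].
    apply HU. lia. lra. }
  rewrite S_INR in HMb.
  eapply Rle_trans. apply Rmult_le_compat; auto. exact Ho. exact HMb.
  replace (-s) with ((2*al+1) + (- (m*q))) by (unfold s; lra). rewrite (Rpower_plus (2*al+1) (-(m*q))). right; ring. Qed.

Lemma onlyif_dir al q : 1/2 <= al -> 1 <= q -> finite_Linf_lq al q (hat_ind01 al) -> q > 2*(al+1)/(al+3/2).
Proof. intros Hal Hq [M [HM [l Hl]]].
  apply Rnot_le_lt. intros Hqq.
  destruct (lower al q Hal ltac:(lra)) as [c [N [c0 [N2 HL]]]].
  set (m := al + 3/2) in *. set (s := m*q - (2*al+1)).
  assert (Hs : s <= 1).
  { unfold s. assert (2*(al+1)/m * m = 2*(al+1)) by (field; unfold m; lra).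
    assert (0 < m) by (unfold m; lra). nra. }
  set (c' := c * Rpower (/2) (2*al+1)).
  assert (c'p : 0 < c') by (apply Rmult_lt_0_compat; [lra|apply Rpower_pos]).
  apply harmonic_div. apply (ex_series_incr_n _ N).
  apply (ex_series_ext (fun k => / c' * (c' * / (INR (N+k) + 1)))).
  { intros k. change (@eq R (/ c' * (c' * / (INR (N + k) + 1))) (/ (INR (N + k) + 1))). field. split. pose proof (pos_INR (N+k)). lra. lra. }
  apply (ex_series_scal (/c') (fun k => c' * / (INR (N + k) + 1))).
  apply (@ex_series_le R_AbsRing R_CompleteNormedModule _ (fun k => omega_n al (S (N+k)) * M (S (N+k)))).
  2:{ apply (ex_series_incr_n (fun k => omega_n al (S k) * M (S k)) N). exists l. apply is_series_Reals; auto. }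
  intros k. rewrite normR. pose proof (pos_INR (N+k)).
  rewrite Rabs_right by (apply Rle_ge, Rmult_le_pos; [lra|left; apply Rinv_0_lt_compat; lra]).
  assert (Hk1 : (1 <= S (N+k))%nat) by lia.
  destruct (omega_bounds al _ Hal Hk1) as [Ho _].
  rewrite S_INR in Ho. replace (INR (N+k) + 1 - 1) with (INR (N+k)) in Ho by ring.
  destruct (HL (S (N+k)) ltac:(lia)) as [lam [Hlam Hc]].
  assert (HMl : rpow (Rabs (hat_ind01 al lam)) q <= M (S (N+k))).
  { destruct (HM (S (N+k)) ltac:(lia)) as [Hub _]. apply Hub. exists lam. split; auto. }
  rewrite S_INR in Hc.
  set (n := INR (N+k) + 1) in *.
  assert (n2 : 2 <= n).
  { unfold n. assert (1 <= INR (N+k)). { replace 1 with (INR 1) by reflexivity. apply le_INR. lia. } lra. }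
  assert (Ho2 : Rpower n (2*al+1) * Rpower (/2) (2*al+1) <= omega_n al (S (N+k))).
  { eapply Rle_trans. 2: exact Ho. rewrite <- Rpower_mul by lra. unfold n in *.
    rewrite rpow_pos by lra. apply Rle_Rpower_l. lra. lra. }
  assert (Hn1 : Rpower n (-1) <= Rpower n (-s)). { apply Rle_Rpower; lra. }
  assert (E1 : Rpower n (-1) = / n). { replace (-1) with (-(1)) by ring. rewrite (Rpower_Ropp n 1), (Rpower_1 n); lra. }
  rewrite E1 in Hn1.
  assert (0 <= Rpower n (2*al+1) * Rpower (/2) (2*al+1)) by (apply Rmult_le_pos; left; apply Rpower_pos).
  assert (0 <= c * Rpower n (- (m * q))) by (apply Rmult_le_pos; [lra| left; apply Rpower_pos]).
  eapply Rle_trans. 2: apply Rmult_le_compat; [exact H0|exact H1|exact Ho2|].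
  2: eapply Rle_trans; [exact Hc|exact HMl].
  replace (Rpower n (2 * al + 1) * Rpower (/ 2) (2 * al + 1) * (c * Rpower n (- (m * q))))
    with (c' * Rpower n (-s)).
  2:{ unfold c', s. replace (- (m*q - (2*al+1))) with ((2*al+1) + - (m*q)) by lra. rewrite (Rpower_plus (2*al+1) (-(m*q))). ring. }
  apply Rmult_le_compat_l; lra. Qed.

Theorem mainTheorem10 (alpha q : R) :
  1 / 2 <= alpha -> 1 <= q ->
  (finite_Linf_lq alpha q (hat_ind01 alpha) <->
     q > 2 * (alpha + 1) / (alpha + 3 / 2)) /\
  finite_Linf_lq alpha 2 (hat_ind01 alpha).
Proof. intros Hal Hq. split. split. apply onlyif_dir; auto. apply if_dir; auto.
  apply if_dir; try lra. apply Rlt_gt. apply Rmult_lt_reg_r with (alpha + 3/2). lra.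
  unfold Rdiv. rewrite Rmult_assoc, Rinv_l by lra. lra. Qed.
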